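(* Let $m\ge 2$, $n=m+1$, and let $A$ be the $n\times n$ matrix of the star graph with center $1$ and leaves $2,\dots,n$, each node carrying a loop of weight $\sqrt m$: $A_{ii}=\sqrt m$ for all $i$, $A_{1j}=A_{j1}=1$ for $j=2,\dots,n$, and all other entries $0$. Let $d=A\mathbb{1}$ and $M_{\mathrm{NG}}=A-\frac{1}{\mathbb{1}^{\mathsf T}d}dd^{\mathsf T}$. Then the largest eigenvalue of $M_{\mathrm{NG}}$ equals $\sqrt m$, it has multiplicity exactly $m-1$, and its eigenspace is $\{x\in\mathbb{R}^n: x_1=0,\ \sum_{i=1}^n x_i=0\}$. Consequently, for every eigenvector $x$ of $M_{\mathrm{NG}}$ associated with $\sqrt m$, the subgraph induced by $\{i: x_i>0\}$ is connected if and only if this set consists of a single node.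
   Context: $\mathbb{1}$ denotes the all-ones vector. The subgraph induced by a set $S$ of nodes is connected if the graph on vertex set $S$ in which distinct $i,j$ are adjacent iff $A_{ij}>0$ is connected. *)

(* Defs.v *)
From HB Require Import structures.
From mathcomp Require Import all_boot all_order all_algebra.
Set Implicit Arguments. Unset Strict Implicit. Unset Printing Implicit Defensive.
Import Order.TTheory GRing.Theory Num.Theory.
Local Open Scope ring_scope.

(* Star graph on 'I_m.+1 with center ord0 (node 1 in the paper) and leaves
   1..m (nodes 2..n in the paper); every node has a loop of weight sqrt m. *)
Definition starA (R : rcfType) (m : nat) : 'M[R]_(m.+1) :=
  \matrix_(i, j) (if i == j then Num.sqrt (m%:R : R)
                  else if (i == ord0) || (j == ord0) then 1 else 0).

Definition degvec (R : rcfType) (n : nat) (A : 'M[R]_n) : 'cV[R]_n :=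
  A *m const_mx 1.

Definition MNG (R : rcfType) (n : nat) (A : 'M[R]_n) : 'M[R]_n :=
  A - (\sum_i degvec A i 0)^-1 *: (degvec A *m (degvec A)^T).

Definition induced_rel (R : rcfType) (n : nat) (A : 'M[R]_n) (S : {set 'I_n}) : rel 'I_n :=
  fun i j => [&& i \in S, j \in S, i != j & 0 < A i j].

Definition induced_connected (R : rcfType) (n : nat) (A : 'M[R]_n) (S : {set 'I_n}) : Prop :=
  forall i j, i \in S -> j \in S -> connect (induced_rel A S) i j.

(* Main.v *)
Require Import Defs.
From HB Require Import structures.
From mathcomp Require Import all_boot all_order all_algebra.
From mathcomp Require Import ring lra.
Import Order.TTheory GRing.Theory Num.Theory.
Set Implicit Arguments. Unset Strict Implicit. Unset Printing Implicit Defensive.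
Local Open Scope ring_scope.

Lemma sum_delta (R : nzRingType) n (k : 'I_n) (a : R) :
  \sum_(j < n) (if j == k then a else 0) = a.
Proof.
rewrite (bigD1 k) //= eqxx big1 ?addr0 // => j /negbTE -> //.
Qed.

Lemma lift0_neq n (j : 'I_n) : (lift ord0 j == ord0 :> 'I_n.+1) = false.
Proof. by apply/negbTE; rewrite eq_sym neq_lift. Qed.

Lemma ord_cases m (i : 'I_m.+1) : i = ord0 \/ exists j : 'I_m, i = lift ord0 j.
Proof. by case: (unliftP ord0 i) => [j|] ->; [right; exists j | left]. Qed.

Lemma degvecE (R : rcfType) m (i : 'I_m.+1) :
  degvec (starA R m) i 0 =
  if i == ord0 then Num.sqrt (m%:R : R) + m%:R else Num.sqrt (m%:R : R) + 1.
Proof.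
rewrite /degvec !mxE big_ord_recl !mxE.
have [->|[i' ->]] := ord_cases i.
- rewrite eqxx mulr1.
  under eq_bigr => j _ do rewrite !mxE /=.
  by rewrite sumr_const card_ord mulr1.
- rewrite !lift0_neq eqxx /= mulr1.
  under eq_bigr => j _ do rewrite !mxE /= (inj_eq (@lift_inj _ ord0)) ?lift0_neq /=.
  rewrite (eq_bigr (fun j => if j == i' then Num.sqrt (m%:R : R) else 0)).
    by rewrite sum_delta addrC.
  by move=> j _; rewrite (eq_sym j) mulr1; case: (i' == j).
Qed.

Lemma sumdeg (R : rcfType) m :
  \sum_i degvec (starA R m) i 0 =
  Num.sqrt (m%:R : R) + m%:R + m%:R * (Num.sqrt (m%:R : R) + 1).
Proof.
rewrite big_ord_recl degvecE eqxx.
under eq_bigr => j _ do rewrite degvecE lift0_neq.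
by rewrite sumr_const card_ord mulr_natl.
Qed.

Lemma dotdeg (R : rcfType) m (x : 'cV[R]_m.+1) :
  \sum_i degvec (starA R m) i 0 * x i 0 =
  (Num.sqrt (m%:R : R) + m%:R) * x ord0 0 +
  (Num.sqrt (m%:R : R) + 1) * \sum_(j < m) x (lift ord0 j) 0.
Proof.
rewrite big_ord_recl degvecE eqxx mulr_sumr.
by under eq_bigr => j _ do rewrite degvecE lift0_neq.
Qed.

Lemma Ax (R : rcfType) m (x : 'cV[R]_m.+1) (i : 'I_m.+1) :
  (starA R m *m x) i 0 =
  if i == ord0 then Num.sqrt (m%:R : R) * x ord0 0 + \sum_(j < m) x (lift ord0 j) 0
  else x ord0 0 + Num.sqrt (m%:R : R) * x i 0.
Proof.
rewrite !mxE big_ord_recl !mxE.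
have [->|[i' ->]] := ord_cases i.
- rewrite eqxx.
  by under eq_bigr => j _ do rewrite !mxE /= mul1r.
- rewrite !lift0_neq eqxx /= mul1r.
  under eq_bigr => j _ do rewrite !mxE /= (inj_eq (@lift_inj _ ord0)) ?lift0_neq /=.
  rewrite (eq_bigr (fun j => if j == i' then Num.sqrt (m%:R : R) * x (lift ord0 i') 0 else 0)).
    by rewrite sum_delta.
  by move=> j _; rewrite (eq_sym j); case: eqP => [->|]; rewrite ?mul0r.
Qed.

Lemma MNGx (R : rcfType) m (x : 'cV[R]_m.+1) (i : 'I_m.+1) :
  (MNG (starA R m) *m x) i 0 =
  (starA R m *m x) i 0 - (\sum_k degvec (starA R m) k 0)^-1 *
     degvec (starA R m) i 0 * \sum_k degvec (starA R m) k 0 * x k 0.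
Proof.
rewrite /MNG mulmxBl -scalemxAl -mulmxA !mxE big_ord1 !mxE.
rewrite -mulrA; congr (_ - _ * (_ * _)).
by apply: eq_bigr => k _; rewrite !mxE.
Qed.

Lemma MNGxE (R : rcfType) m (x : 'cV[R]_m.+1) (i : 'I_m.+1) :
  let s := Num.sqrt (m%:R : R) in
  let T := s + m%:R + m%:R * (s + 1) in
  let D := (s + m%:R) * x ord0 0 + (s + 1) * \sum_(j < m) x (lift ord0 j) 0 in
  (MNG (starA R m) *m x) i 0 =
  if i == ord0 then s * x ord0 0 + \sum_(j < m) x (lift ord0 j) 0 - T^-1 * (s + m%:R) * D
  else x ord0 0 + s * x i 0 - T^-1 * (s + 1) * D.
Proof.
move=> s T D.
rewrite MNGx Ax sumdeg dotdeg degvecE.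
by case: (i == ord0).
Qed.

Lemma sqrt_facts (R : rcfType) m : (0 < m)%N ->
  0 < Num.sqrt (m%:R : R) /\ Num.sqrt (m%:R : R) ^+ 2 = m%:R.
Proof.
move=> hm; split; first by rewrite sqrtr_gt0 ltr0n.
by rewrite sqr_sqrtr // ler0n.
Qed.

Lemma eig_iff (R : rcfType) m (hm : (0 < m)%N) (x : 'cV[R]_m.+1) :
  MNG (starA R m) *m x = Num.sqrt (m%:R : R) *: x <->
  x ord0 0 = 0 /\ \sum_i x i 0 = 0.
Proof.
have [sp s2] := sqrt_facts R hm.
have mp : 0 < (m%:R : R) by rewrite ltr0n.
rewrite big_ord_recl.
set s := Num.sqrt (m%:R : R) in sp s2 *.
set x0 := x ord0 0.
set Sr := \sum_(j < m) x (lift ord0 j) 0.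
set T := s + m%:R + m%:R * (s + 1).
set D := (s + m%:R) * x0 + (s + 1) * Sr.
have Tp : 0 < T by rewrite /T; nra.
have cT : T^-1 * T = 1 by rewrite mulVf // gt_eqF.
split.
- move=> H.
  have H0 := congr1 (fun X : 'cV[R]_m.+1 => X ord0 0) H.
  have H1 := congr1 (fun X : 'cV[R]_m.+1 => X (lift ord0 (Ordinal hm)) 0) H.
  move: H0 H1 => /=; rewrite !MNGxE /= !mxE -/x0 -/Sr -/s -/T -/D.
  move=> H0 H1.
  have hS : Sr * T = (s + m%:R) * D.
    have -> : Sr = T^-1 * (s + m%:R) * D by lra.
    by transitivity ((s + m%:R) * D * (T^-1 * T)); [ring | rewrite cT mulr1].
  have hx : x0 * T = (s + 1) * D.
    have -> : x0 = T^-1 * (s + 1) * D by lra.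
    by transitivity ((s + 1) * D * (T^-1 * T)); [ring | rewrite cT mulr1].
  have hD : D * (T - 2 * (s + 1) * (s + m%:R)) = 0.
    have -> : D * (T - 2 * (s + 1) * (s + m%:R)) =
      (s + m%:R) * (x0 * T) + (s + 1) * (Sr * T) - 2 * (s + 1) * (s + m%:R) * D.
      by rewrite /D; ring.
    rewrite hS hx; ring.
  have D0 : D = 0.
    move/eqP: hD; rewrite mulf_eq0 => /orP [/eqP //|].
    by move=> /eqP h; exfalso; move: h; rewrite /T; nra.
  have x00 : x0 = 0 by move: hx; rewrite D0 mulr0 => /eqP; rewrite mulf_eq0 (gt_eqF Tp) orbF => /eqP.
  have S0 : Sr = 0 by move: hS; rewrite D0 mulr0 => /eqP; rewrite mulf_eq0 (gt_eqF Tp) orbF => /eqP.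
  by rewrite x00 S0 addr0.
- move=> [x00 hs].
  have S0 : Sr = 0 by rewrite -hs x00 add0r.
  have D0 : D = 0 by rewrite /D x00 S0 !mulr0 addr0.
  apply/matrixP => i j; rewrite ord1 MNGxE -/s -/x0 -/Sr -/T -/D D0 mxE.
  case: eqP => [->|_]; rewrite -/x0 ?x00 ?S0; ring.
Qed.

Lemma char_poly_conj (F : fieldType) n (P M : 'M[F]_n) : P \in unitmx ->
  char_poly (invmx P *m M *m P) = char_poly M.
Proof.
move=> Pu; rewrite /char_poly /char_poly_mx.
have -> : 'X%:M - map_mx polyC (invmx P *m M *m P) =
   map_mx polyC (invmx P) *m ('X%:M - map_mx polyC M) *m map_mx polyC P.
  rewrite mulmxBr mulmxBl !map_mxM; congr (_ - _).
  by rewrite mul_mx_scalar -scalemxAl -map_mxM mulVmx // map_mx1 scalemx1.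
rewrite !det_mulmx !det_map_mx mulrC mulrA -rmorphM det_inv mulfV ?mul1r //.
by rewrite -unitfE -unitmxE.
Qed.

Lemma char_poly_tr (R : comNzRingType) n (M : 'M[R]_n) :
  char_poly M^T = char_poly M.
Proof.
by rewrite /char_poly /char_poly_mx -[RHS]det_tr raddfB /= tr_scalar_mx map_trmx.
Qed.

Definition Pmx (R : rcfType) m : 'M[R]_m.+1 :=
  \matrix_(i, k) (if k == ord0 then 1 else if k == ord_max then (i == k)%:R
                  else (i == k)%:R - ((i : nat) == k.+1)%:R).

Lemma Pmx_trig (R : rcfType) m : is_trig_mx (Pmx R m).
Proof.
apply/is_trig_mxP => i j lij; rewrite mxE.
have -> : (j == ord0) = false by apply/negbTE; rewrite -val_eqE /= -lt0n (leq_ltn_trans _ lij).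
have -> : (i == j) = false by apply/negbTE; rewrite -val_eqE /= ltn_eqF.
have -> : ((i : nat) == j.+1) = false by rewrite ltn_eqF // ltnS ltnW.
by case: ifP; rewrite ?subr0.
Qed.

Lemma Pmx_diag (R : rcfType) m (i : 'I_m.+1) : Pmx R m i i = 1.
Proof.
rewrite mxE eqxx; case: ifP => // _; case: ifP => // _.
by rewrite (_ : (i == i.+1 :> nat) = false) ?subr0 //; elim: (i : nat).
Qed.

Lemma Pmx_unit (R : rcfType) m : Pmx R m \in unitmx.
Proof.
rewrite unitmxE det_trig ?Pmx_trig //.
by rewrite (eq_bigr (fun _ => 1)) ?big1_eq ?unitr1 // => i _; rewrite Pmx_diag.
Qed.

Lemma sum_nat_eq (R : rcfType) n (k : nat) : (k < n)%N ->
  \sum_(i < n) (((i : nat) == k)%:R : R) = 1.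
Proof.
move=> hk; rewrite (eq_bigr (fun i : 'I_n => if i == Ordinal hk then 1 else 0)).
  by rewrite sum_delta.
by move=> i _; rewrite -val_eqE /=; case: eqP.
Qed.

Lemma Pcol_eig (R : rcfType) m (hm : (0 < m)%N) (k : 'I_m.+1) : k != ord_max ->
  MNG (starA R m) *m col k (Pmx R m) =
  (if k == ord0 then 0 else Num.sqrt (m%:R : R)) *: col k (Pmx R m).
Proof.
move=> kmax.
have [sp s2] := sqrt_facts R hm.
case: eqP => [->|k0].
- rewrite scale0r; apply/matrixP => i j; rewrite ord1 MNGxE !mxE.
  under eq_bigr => l _ do rewrite !mxE eqxx.
  rewrite eqxx sumr_const card_ord.
  set s := Num.sqrt (m%:R : R) in sp s2 *.
  set T := s + m%:R + m%:R * (s + 1).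
  have Tp : 0 < T by rewrite /T; nra.
  have -> : (s + m%:R) * 1 + (s + 1) * m%:R = T by rewrite /T; ring.
  have cT : forall a, T^-1 * a * T = a.
    by move=> a; rewrite mulrAC mulVf ?gt_eqF // mul1r.
  by rewrite !cT; case: ifP => _; ring.
- have k0' : (k == ord0) = false by apply/eqP.
  have k0'' : (ord0 == k) = false by rewrite eq_sym.
  apply/eig_iff => //; split.
  + rewrite !mxE ?k0' ?(negbTE kmax) k0'' /=.
    by rewrite subr0.
  + under eq_bigr => i _ do rewrite !mxE ?k0' ?(negbTE kmax).
    have hk : (k.+1 < m.+1)%N.
      by rewrite ltnS ltn_neqAle -ltnS ltn_ord andbT; move: kmax; rewrite -val_eqE.
    rewrite sumrB (sum_nat_eq _ hk).
    rewrite (eq_bigr (fun i => if i == k then 1 else 0)) ?sum_delta ?subrr //.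
    by move=> i _; case: eqP.
Qed.

Definition Bmx (R : rcfType) m : 'M[R]_m.+1 :=
  invmx (Pmx R m) *m MNG (starA R m) *m Pmx R m.

Lemma Bcol (R : rcfType) m (hm : (0 < m)%N) (k i : 'I_m.+1) : k != ord_max ->
  Bmx R m i k = (if k == ord0 then 0 else Num.sqrt (m%:R : R)) * (i == k)%:R.
Proof.
move=> kmax.
have hc : col k (Bmx R m) =
   (if k == ord0 then 0 else Num.sqrt (m%:R : R)) *: col k 1%:M.
  rewrite /Bmx colE -!mulmxA -colE Pcol_eig // -scalemxAr.
  by rewrite colE mulmxA -colE mulVmx ?Pmx_unit.
have := congr1 (fun X : 'cV[R]_m.+1 => X i 0) hc.
by rewrite /= !mxE.
Qed.

Lemma Bdiag_cases (R : rcfType) m' (i : 'I_m'.+1) :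
  ((widen_ord (leqnSn m'.+1) i : 'I_m'.+2) == ord0) = (i == ord0).
Proof. by rewrite -!val_eqE. Qed.

Lemma widen_neq_max m (i : 'I_m) : (widen_ord (leqnSn m) i == ord_max) = false.
Proof. by apply/negbTE; rewrite -val_eqE /= neq_ltn ltn_ord. Qed.

Lemma char_B (R : rcfType) m' :
  char_poly (Bmx R m'.+1) =
  ('X * ('X - (Num.sqrt (m'.+1%:R : R))%:P) ^+ m') *
     ('X - (Bmx R m'.+1 ord_max ord_max)%:P).
Proof.
rewrite -char_poly_tr char_poly_trig; last first.
  apply/is_trig_mxP => i j lij; rewrite mxE Bcol //; last first.
    by rewrite -val_eqE /= neq_ltn (leq_trans lij) // -ltnS ltn_ord.
  by rewrite (_ : (j == i) = false) ?mulr0 // -val_eqE /= gtn_eqF.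
rewrite big_ord_recr /= mxE; congr (_ * _).
under eq_bigr => i _ do rewrite mxE Bcol // ?widen_neq_max // eqxx mulr1.
rewrite big_ord_recl -val_eqE /= subr0; congr (_ * _).
by rewrite prodr_const card_ord.
Qed.

Lemma trB (R : rcfType) m' :
  \tr (Bmx R m'.+1) =
  m'%:R * Num.sqrt (m'.+1%:R : R) + Bmx R m'.+1 ord_max ord_max.
Proof.
rewrite /mxtrace big_ord_recr /=; congr (_ + _).
under eq_bigr => i _ do rewrite Bcol // ?widen_neq_max // eqxx mulr1.
rewrite big_ord_recl -val_eqE /= add0r.
by rewrite sumr_const card_ord mulr_natl.
Qed.

Lemma trBM (R : rcfType) m : \tr (Bmx R m) = \tr (MNG (starA R m)).
Proof.
by rewrite /Bmx mxtrace_mulC mulmxA mulmxV ?Pmx_unit // mul1mx.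
Qed.

Lemma trM (R : rcfType) m :
  let s := Num.sqrt (m%:R : R) in
  let T := s + m%:R + m%:R * (s + 1) in
  \tr (MNG (starA R m)) =
  (s - T^-1 * ((s + m%:R) * (s + m%:R))) + m%:R * (s - T^-1 * ((s + 1) * (s + 1))).
Proof.
move=> s T.
have dd : forall i, (MNG (starA R m)) i i = s - T^-1 * (degvec (starA R m) i 0 * degvec (starA R m) i 0).
  move=> i; rewrite /MNG !mxE eqxx big_ord1 !mxE sumdeg.
  by [].
rewrite /mxtrace big_ord_recl dd degvecE eqxx; congr (_ + _).
under eq_bigr => i _ do rewrite dd degvecE lift0_neq.
by rewrite sumr_const card_ord mulr_natl.
Qed.

Theorem mainTheorem6 (R : rcfType) (m : nat) (hm : (2 <= m)%N) :
  let A := starA R m in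
  let M := MNG A in
  (* sqrt m is an eigenvalue and it is the largest one *)
  [/\ eigenvalue M (Num.sqrt (m%:R : R)),
      (forall a : R, eigenvalue M a -> a <= Num.sqrt (m%:R : R)),
      (* algebraic multiplicity exactly m - 1 *)
      mup (Num.sqrt (m%:R : R)) (char_poly M) = (m - 1)%N,
      (* eigenspace = { x : x_1 = 0, sum_i x_i = 0 } *)
      (forall x : 'cV[R]_(m.+1),
          M *m x = Num.sqrt (m%:R : R) *: x <-> x ord0 0 = 0 /\ \sum_i x i 0 = 0) &
      (* for every eigenvector, {i | x_i > 0} induces a connected subgraph iff it is a singleton *)
      (forall x : 'cV[R]_(m.+1), x != 0 -> M *m x = Num.sqrt (m%:R : R) *: x ->
          induced_connected A [set i | 0 < x i 0] <-> #|[set i | 0 < x i 0]| = 1%N)].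
Proof.
case: m hm => [|[|m']] // hm.
have hm0 : (0 < m'.+2)%N by [].
move=> A M.
have [sp s2] := sqrt_facts R hm0.
have mp : 0 < (m'.+2%:R : R) by rewrite ltr0n.
have eig := eig_iff hm0.
set s := Num.sqrt (m'.+2%:R : R) in sp s2 mp eig *.
set t := Bmx R m'.+2 ord_max ord_max.
have hchar : char_poly M = 'X * ('X - s%:P) ^+ m'.+1 * ('X - t%:P).
  rewrite /M /A; have := char_B R m'.+1; rewrite {1}/Bmx char_poly_conj ?Pmx_unit // => ->.
set T := s + m'.+2%:R + m'.+2%:R * (s + 1).
have Tp : 0 < T by rewrite /T; nra.
have ht : t = (s - T^-1 * ((s + m'.+2%:R) * (s + m'.+2%:R))) +
     m'.+2%:R * (s - T^-1 * ((s + 1) * (s + 1))) - m'.+1%:R * s.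
  move: (trB R m'.+1); rewrite trBM trM /= -/s -/T -/t => h. by rewrite h addrAC subrr add0r.
have tlt : t < s.
  have key : T * s < (s + m'.+2%:R) * (s + m'.+2%:R) + m'.+2%:R * ((s + 1) * (s + 1)).
    rewrite /T; nra.
  have : s < T^-1 * ((s + m'.+2%:R) * (s + m'.+2%:R) + m'.+2%:R * ((s + 1) * (s + 1))).
    by rewrite ltr_pdivlMl.
  rewrite ht mulrDr -!/(T^-1 * _) (mulrCA _ (m'.+2%:R)).
  rewrite -[_.+2%:R]natr1 -[_.+1%:R]natr1 => h.
  set u := T^-1 * _ in h *.
  nra.
split.
- by rewrite eigenvalue_root_char hchar !rootM root_exp_XsubC eqxx orbT.
- move=> a; rewrite eigenvalue_root_char hchar !rootM root_exp_XsubC rootX root_XsubC.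
  by case/orP => [/orP [/eqP -> | /eqP ->] | /eqP ->]; [apply/ltW | | apply/ltW].
- rewrite hchar mupMl; last by rewrite root_XsubC gt_eqF.
  rewrite mupMr; last by rewrite rootX gt_eqF.
  by rewrite mup_XsubCX eqxx subn1.
- exact: eig.
- move=> x x0 /eig [x00 hs].
  set S := [set i | 0 < x i 0].
  have Snz : forall i, i \in S -> i != ord0.
    by move=> i; rewrite inE; apply: contraTneq => ->; rewrite x00 ltxx.
  have norel : forall i j, induced_rel A S i j = false.
    move=> i j; rewrite /induced_rel.
    case iS : (i \in S) => //; case jS : (j \in S) => //=.
    case: eqP => //= /eqP ij; rewrite /A mxE (negbTE ij).
    by rewrite (negbTE (Snz _ iS)) (negbTE (Snz _ jS)) ltxx.
  have conn : forall i j, connect (induced_rel A S) i j -> i = j.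
    move=> i j /connectP [[|y p] hp ->] //.
    by move: hp; rewrite /= norel.
  have [S0|[i0 i0S]] := set_0Vmem S.
    exfalso.
    have hle : forall i, x i 0 <= 0.
      move=> i; have : i \notin S by rewrite S0 inE.
      by rewrite inE -leNgt.
    case/matrix0Pn: x0 => j [k]; rewrite ord1 => hj.
    have hneg : x j 0 < 0 by rewrite lt_neqAle hj hle.
    have : \sum_i x i 0 <= x j 0.
      by rewrite (bigD1 j) //= gerDl; apply: sumr_le0 => i _; apply: hle.
    by rewrite hs => /(lt_le_trans hneg); rewrite ltxx.
  split.
  + move=> hc; apply/eqP/cards1P; exists i0; apply/setP => j; rewrite inE.
    apply/idP/eqP => [jS|->//]; exact/esym/conn/hc.
  + move/eqP/cards1P => [a Sa] i j; rewrite Sa !inE => /eqP -> /eqP ->.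
    exact: connect0.
Qed.
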